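(* Let $\mathcal S\subset\{1,\dots,N\}$, let $\boldsymbol\rho\in\mathbb C^N$ be supported in $\mathcal S$, let $\mathbf d=\mathcal G\boldsymbol\rho$ and $\mathcal Y=\{\vec{\mathbf z}_j:j\in\mathcal S\}$. Let $0<\varepsilon<r<1$ and let $\mathcal S_\varepsilon\subset\mathcal S$ be such that $\mathcal Y\subset\bigcup_{q\in\mathcal S_\varepsilon}\mathcal B_\varepsilon(\vec{\mathbf z}_q)$, and such that the balls $\mathcal B_r(\vec{\mathbf z}_q)$, $q\in\mathcal S_\varepsilon$, are pairwise disjoint (hence so are the balls $\mathcal B_\varepsilon(\vec{\mathbf z}_q)$, $q\in\mathcal S_\varepsilon$). Let $\mathcal Y_\varepsilon=\{\vec{\mathbf z}_j:j\in\mathcal S_\varepsilon\}$ and assume $\mathcal I(\mathcal Y_\varepsilon)<1$. Define the effective source vector $\bar{\boldsymbol\rho}\in\mathbb C^N$ by $$\bar\rho_j=\sum_{q\in\mathcal S:\ \vec{\mathbf z}_q\in\mathcal B_\varepsilon(\vec{\mathbf z}_j)}\rho_q\,\langle\mathbf g_j,\mathbf g_q\rangle\ \ (j\in\mathcal S_\varepsilon),\qquad\bar\rho_j=0\ \ (j\notin\mathcal S_\varepsilon).$$ Let $\boldsymbol\rho_\star$ be a minimizer of $\|\mathbf x\|_1$ over $\mathbf x\in\mathbb C^N$ subject to $\mathcal G\mathbf x=\mathbf d$, and decompose $\boldsymbol\rho_\star=\boldsymbol\rho_\star^{(i)}+\boldsymbol\rho_\star^{(o)}$ with $(\boldsymbol\rho_\star^{(i)})_q=(\boldsymbol\rho_\star)_q$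 if $\vec{\mathbf z}_q\in\bigcup_{j\in\mathcal S_\varepsilon}\mathcal B_r(\vec{\mathbf z}_j)$ and $0$ otherwise. Then $$\|\boldsymbol\rho_\star^{(o)}\|_1\le\frac{2\,\mathcal I(\mathcal Y_\varepsilon)}{r}\|\boldsymbol\rho_\star\|_1+\frac{\|\boldsymbol\rho\|_1-\|\bar{\boldsymbol\rho}\|_1}{r}.$$
   Context: Let $W$ be a set (the imaging region) and $M\ge1$. For each $\vec{\mathbf y}\in W$ let $\mathbf g_{\vec{\mathbf y}}\in\mathbb C^M$ be a vector with $\|\mathbf g_{\vec{\mathbf y}}\|_2=1$. Let $\vec{\mathbf z}_1,\dots,\vec{\mathbf z}_N\in W$ be distinct (grid) points, write $\mathbf g_j=\mathbf g_{\vec{\mathbf z}_j}$, and let $\mathcal G\in\mathbb C^{M\times N}$ be the matrix with columns $\mathbf g_j$. Inner product: $\langle\mathbf u,\mathbf v\rangle=\mathbf u^H\mathbf v=\sum_i\overline{u_i}v_i$. $\|\cdot\|_1$ is the $\ell_1$ norm. Semi-metric: $\mathscr D(\vec{\mathbf y},\vec{\mathbf y}')=1-|\langle\mathbf g_{\vec{\mathbf y}},\mathbf g_{\vec{\mathbf y}'}\rangle|$; ball $\mathcal B_r(\vec{\mathbf y})=\{\vec{\mathbf y}'\in W:\ \mathscr D(\vec{\mathbf y},\vec{\mathbf y}')<r\}$. Interaction coefficient: for a finite set $\mathcal Y\subset W$ and each $q$, let $\mathscr N(\vec{\mathbf z}_q)\in\mathcal Y$ be a point of $\mathcal Y$ minimizing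 $\mathscr D(\vec{\mathbf z}_q,\cdot)$ over $\mathcal Y$; then $\mathcal I(\mathcal Y)=\max_{q=1,\dots,N}\sum_{\vec{\mathbf y}\in\mathcal Y\setminus\{\mathscr N(\vec{\mathbf z}_q)\}}|\langle\mathbf g_{\vec{\mathbf y}},\mathbf g_q\rangle|$. *)

(* Defs.v *)
(* Complex numbers are modelled by an arbitrary
   numClosedFieldType C (e.g. algC). *)
From HB Require Import structures.
From mathcomp Require Import all_boot all_order all_algebra.
Set Implicit Arguments. Unset Strict Implicit. Unset Printing Implicit Defensive.
Import Order.TTheory GRing.Theory Num.Theory.
Local Open Scope ring_scope.

Section Defs.
Variable C : numClosedFieldType.

Definition inner (M : nat) (u v : 'I_M -> C) : C := \sum_(i < M) (u i)^* * v i.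

Definition sdist (W : Type) (M : nat) (g : W -> 'I_M -> C) (y y' : W) : C :=
  1 - `|inner (g y) (g y')|.

Definition in_ball (W : Type) (M : nat) (g : W -> 'I_M -> C) (r : C) (y y' : W) : bool :=
  sdist g y y' < r.

Definition l1 (N : nat) (x : 'I_N -> C) : C := \sum_(j < N) `|x j|.

Definition Gmul (W : Type) (M N : nat) (g : W -> 'I_M -> C) (z : 'I_N -> W)
  (x : 'I_N -> C) : 'I_M -> C := fun i => \sum_(j < N) g (z j) i * x j.

Definition nearest_sel (W : Type) (M N : nat) (g : W -> 'I_M -> C) (z : 'I_N -> W)
  (T : {set 'I_N}) (nn : 'I_N -> 'I_N) : Prop :=
  forall q, nn q \in T /\ (forall j, j \in T -> sdist g (z q) (z (nn q)) <= sdist g (z q) (z j)).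

Definition interaction (W : Type) (M N : nat) (g : W -> 'I_M -> C) (z : 'I_N -> W)
  (T : {set 'I_N}) (nn : 'I_N -> 'I_N) : C :=
  \big[Num.max/0]_(q < N) \sum_(j in T | j != nn q) `|inner (g (z j)) (g (z q))|.

End Defs.

(* Main.v *)
Require Import Defs.
From HB Require Import structures.
From mathcomp Require Import all_boot all_order all_algebra.
Import Order.TTheory GRing.Theory Num.Theory.
From mathcomp Require Import ring.
Local Open Scope ring_scope.

Section H.
Variable C : numClosedFieldType.

Lemma inner_sym_norm (M : nat) (u v : 'I_M -> C) : `|inner v u| = `|inner u v|.
Proof.
have -> : inner v u = (inner u v)^*.
  rewrite /inner rmorph_sum; apply: eq_bigr => i _.
  by rewrite rmorphM /= conjCK mulrC.
by rewrite norm_conjC.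
Qed.

Lemma inner_le1 (M : nat) (u v : 'I_M -> C) :
  inner u u = 1 -> inner v v = 1 -> `|inner u v| <= 1.
Proof.
move=> Hu Hv; set a := inner u v.
have Hva : inner v u = a^*.
  rewrite /a /inner rmorph_sum; apply: eq_bigr => i _.
  by rewrite rmorphM /= conjCK mulrC.
have E : \sum_i (v i - a * u i)^* * (v i - a * u i) =
   inner v v - a * inner v u - a^* * inner u v + a * a^* * inner u u.
  rewrite /inner !mulr_sumr -!sumrB -big_split /=; apply: eq_bigr => i _.
  rewrite rmorphB rmorphM /=; clearbody a; ring.
have P : 0 <= \sum_i (v i - a * u i)^* * (v i - a * u i).
  apply: sumr_ge0 => i _; rewrite mulrC -normCK; exact: exprn_ge0.
rewrite E Hu Hv Hva -/a mulr1 -normCK in P.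
rewrite -(@expr_le1 _ 2) // -subr_ge0.
by move: P; clearbody a; congr (0 <= _); rewrite (mulrC a^*) -normCK; ring.
Qed.

Lemma le_bigmax_seq (I : eqType) (s : seq I) (F : I -> C) :
  (forall i, 0 <= F i) ->
  0 <= \big[Num.max/0]_(i <- s) F i /\
  forall x, x \in s -> F x <= \big[Num.max/0]_(i <- s) F i.
Proof.
move=> F0; elim: s => [|y s [IH0 IH]]; first by rewrite big_nil.
rewrite big_cons.
set b := \big[_/_]_(i <- s) F i in IH0 IH *.
have Ry : F y \is Num.real by apply: ger0_real.
have Rb : b \is Num.real by apply: ger0_real.
have Hy : F y <= Num.max (F y) b.
  rewrite /Num.max /Order.max; case: ifP => // /ltW //.
have Hb : b <= Num.max (F y) b.
  rewrite /Num.max /Order.max; case: ifP => // H.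
  by rewrite (real_leNgt Rb Ry) H.
split; first exact: le_trans (F0 y) Hy.
move=> x; rewrite in_cons => /orP [/eqP -> //|/IH H].
exact: le_trans H Hb.
Qed.

End H.


Theorem theorem6 (C : numClosedFieldType) (W : Type) (M N : nat)
  (g : W -> 'I_M -> C) (z : 'I_N -> W)
  (HM : (0 < M)%N)
  (Hg : forall y, inner (g y) (g y) = 1)
  (Hz : injective z)
  (S Seps : {set 'I_N}) (rho : 'I_N -> C)
  (Hrho : forall j, j \notin S -> rho j = 0)
  (eps r : C) (Heps : 0 < eps) (Hepsr : eps < r) (Hr1 : r < 1)
  (HSeps : Seps \subset S)
  (Hcover : forall j, j \in S -> exists2 q, q \in Seps & in_ball g eps (z q) (z j))
  (Hdisj : forall q1 q2, q1 \in Seps -> q2 \in Seps -> q1 != q2 ->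
             forall y : W, ~~ (in_ball g r (z q1) y && in_ball g r (z q2) y))
  (nn : 'I_N -> 'I_N) (Hnn : nearest_sel g z Seps nn)
  (HI : interaction g z Seps nn < 1)
  (rho_star : 'I_N -> C)
  (Hfeas : Gmul g z rho_star = Gmul g z rho)
  (Hmin : forall x : 'I_N -> C, Gmul g z x = Gmul g z rho -> l1 rho_star <= l1 x) :
  let rhobar : 'I_N -> C := fun j =>
    if j \in Seps then
      \sum_(q in S | in_ball g eps (z j) (z q)) rho q * inner (g (z j)) (g (z q))
    else 0 in
  let rho_o : 'I_N -> C := fun q =>
    if [exists j in Seps, in_ball g r (z j) (z q)] then 0 else rho_star q in
  l1 rho_o <= 2 * interaction g z Seps nn / r * l1 rho_star + (l1 rho - l1 rhobar) / r.

Proof.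
cbv zeta.
set rhobar := (fun j : 'I_N => if j \in Seps then _ else 0).
set rho_o := (fun q : 'I_N => if _ then 0 else rho_star q).
set I := interaction g z Seps nn.
pose ip j q := inner (g (z j)) (g (z q)).
have Iq : forall q, \sum_(j in Seps | j != nn q) `|ip j q| <= I.
  move=> q; rewrite /I /interaction.
  have [_ ] := @le_bigmax_seq C _ (index_enum 'I_N)
     (fun q => \sum_(j in Seps | j != nn q) `|inner (g (z j)) (g (z q))|)
     (fun i => sumr_ge0 _ (fun j _ => normr_ge0 _)).
  by apply; rewrite mem_index_enum.
have I0 : 0 <= I.
  rewrite /I /interaction.
  have [] := @le_bigmax_seq C _ (index_enum 'I_N)
     (fun q => \sum_(j in Seps | j != nn q) `|inner (g (z j)) (g (z q))|)
     (fun i => sumr_ge0 _ (fun j _ => normr_ge0 _)).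
  by move=> H _.
have Hsym : forall a b, sdist g a b = sdist g b a.
  by move=> a b; rewrite /sdist inner_sym_norm.
have HG : forall x j, inner (g (z j)) (Gmul g z x) = \sum_q x q * ip j q.
  move=> x j; rewrite /inner /Gmul /ip.
  under eq_bigr do rewrite mulr_sumr.
  rewrite exchange_big /=; apply: eq_bigr => q _; rewrite mulr_sumr; apply: congr_big => // i _; by rewrite mulrA mulrC.
have A : forall j, j \in Seps -> `|rhobar j| <=
    \sum_q `|rho_star q| * `|ip j q| +
    \sum_q (if (q \in S) && ~~ in_ball g eps (z j) (z q) then `|rho q| * `|ip j q| else 0).
  move=> j Hj; rewrite /rhobar Hj.
  set B := \sum_(q in S | _) _.
  have T : \sum_q rho q * ip j q = B +
     \sum_q (if (q \in S) && ~~ in_ball g eps (z j) (z q) then rho q * ip j q else 0).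
    rewrite -big_mkcond /B -bigID /= [RHS]big_mkcond /=; apply: eq_bigr => q _; rewrite /ip.
    by case: ifP => // /negbT /Hrho ->; rewrite mul0r.
  have -> : B = \sum_q rho q * ip j q -
     \sum_q (if (q \in S) && ~~ in_ball g eps (z j) (z q) then rho q * ip j q else 0).
    by rewrite T addrK.
  apply: le_trans (ler_normB _ _) _; apply: lerD.
    rewrite -HG -Hfeas HG; apply: le_trans (ler_norm_sum _ _ _) _.
    by apply: ler_sum => q _; rewrite normrM.
  apply: le_trans (ler_norm_sum _ _ _) _.
  by apply: ler_sum => q _; case: ifP; rewrite ?normr0 ?normrM.
have r0 : 0 < r by apply: lt_trans Heps Hepsr.
have rR : r \is Num.real by apply: gtr0_real.
have B1 : forall q, `|rho_star q| * \sum_(j in Seps) `|ip j q| <=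
    `|rho_star q| * (1 + I) - r * `|rho_o q|.
  move=> q; have [Hnq _] := Hnn q.
  rewrite (bigD1 (nn q)) //=.
  rewrite /rho_o; case: ifP => Hex.
    rewrite normr0 mulr0 subr0; apply: ler_wpM2l => //.
    by apply: lerD => //; apply: inner_le1.
  have Hout : ~~ in_ball g r (z (nn q)) (z q).
    by apply/negP => Hb; move/negbT/negP: Hex; apply; apply/existsP; exists (nn q); rewrite Hnq.
  have Hle : `|ip (nn q) q| <= 1 - r.
    move: Hout; rewrite /in_ball /sdist -/(ip (nn q) q) => Hout.
    have R1 : 1 - `|ip (nn q) q| \is Num.real by rewrite rpredB ?real1 ?normr_real.
    have : r <= 1 - `|ip (nn q) q| by rewrite (real_leNgt rR R1).
    move=> h; rewrite -subr_ge0.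
    have -> : 1 - r - `|ip (nn q) q| = (1 - `|ip (nn q) q|) - r by ring.
    by rewrite subr_ge0.
  have -> : `|rho_star q| * (1 + I) - r * `|rho_star q| = `|rho_star q| * ((1 - r) + I) by ring.
  by apply: ler_wpM2l => //; apply: lerD.
have B2 : forall q, \sum_(j in Seps)
    (if (q \in S) && ~~ in_ball g eps (z j) (z q) then `|rho q| * `|ip j q| else 0)
    <= `|rho q| * I.
  move=> q; case: (boolP (q \in S)) => HqS; last first.
    by rewrite big1 ?mulr_ge0 // => j _.
  have [j0 Hj0 Hb0] := Hcover q HqS.
  have [Hnq Hmin'] := Hnn q.
  have Hbn : in_ball g eps (z (nn q)) (z q).
    rewrite /in_ball Hsym; apply: le_lt_trans (Hmin' j0 Hj0) _.
    by rewrite -Hsym.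
  apply: (@le_trans _ _ (\sum_(j in Seps) (if j != nn q then `|rho q| * `|ip j q| else 0))).
    apply: ler_sum => j _; case: (eqVneq j (nn q)) => [->|_] /=.
      by rewrite Hbn.
    by case: ifP => // _; rewrite mulr_ge0.
  rewrite -big_mkcondr -mulr_sumr; exact: ler_wpM2l.
have Main : l1 rhobar <= (1 + I) * l1 rho_star - r * l1 rho_o + I * l1 rho.
  have -> : l1 rhobar = \sum_(j in Seps) `|rhobar j|.
    rewrite /l1 [RHS]big_mkcond; apply: eq_bigr => j _.
    by rewrite /rhobar; case: ifP => //; rewrite normr0.
  apply: le_trans (ler_sum _ A) _.
  rewrite big_split /= (exchange_big _ _ _ (mem Seps)) /=.
  rewrite (exchange_big _ _ _ (mem Seps)) /=.
  have X1 : forall q, \sum_(j in Seps) `|rho_star q| * `|ip j q| <=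
      `|rho_star q| * (1 + I) - r * `|rho_o q|.
    by move=> q; rewrite -mulr_sumr; exact: B1.
  apply: le_trans (lerD (ler_sum _ (fun q _ => X1 q)) (ler_sum _ (fun q _ => B2 q))) _.
  rewrite sumrB -!mulr_suml -mulr_sumr /l1.
  rewrite le_eqVlt; apply/orP; left; apply/eqP; ring.
have Hl : l1 rho_star <= l1 rho by apply: Hmin.
have rn0 : r != 0 by rewrite gt_eqF.
rewrite -subr_ge0.
have -> : 2 * I / r * l1 rho_star + (l1 rho - l1 rhobar) / r - l1 rho_o =
   (((1 + I) * l1 rho_star - r * l1 rho_o + I * l1 rho - l1 rhobar)
     + (1 - I) * (l1 rho - l1 rho_star)) / r.
  by field.
apply: divr_ge0; last exact: ltW.
apply: addr_ge0; first by rewrite subr_ge0.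
by apply: mulr_ge0; rewrite subr_ge0 // ltW.
Qed.
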